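(* Let $\mathcal{H}=\mathbb{C}^2$ and let $\mathcal{GE}$ be the set of all entanglement breaking quantum channels on $\mathcal{L}(\mathcal{H})$. For every density operator $\tau$ on $\mathcal{H}\otimes\mathcal{H}$, $$C(\tau,\mathcal{GE})=\max_{\Psi\in\mathcal{GE}}\operatorname{tr}[\tau J_\Psi]\le\frac12\left(1+\sqrt{\|\boldsymbol{b}(\tau_2)\|^2+\|N(\tau)\|^2}\right),$$ where $\tau_2=\operatorname{tr}_1\tau$ and $\|N(\tau)\|$ is the operator norm of $N(\tau)$ induced by the Euclidean norm on $\mathbb{R}^3$.
   Context: A quantum channel is a linear, completely positive, trace preserving map on $\mathcal{L}(\mathcal{H})$; it is entanglement breaking if $(\mathrm{id}\otimes\Psi)(\rho)$ is separable for every density operator $\rho$ on $\mathcal{H}\otimes\mathcal{H}$. $J_\Psi=(\mathrm{id}\otimes\Psi)(P'_+)$ with $P'_+=\sum_{i,j=0}^1|i\rangle\langle j|\otimes|i\rangle\langle j|$ in the computational basis. $\operatorname{tr}_1$ is the partial trace over the first factor. Bloch vector: $b(X)_i=\operatorname{tr}[\sigma_iX]$, $i=1,2,3$, with Euclidean norm $\|\cdot\|$. Correlation matrix: $N(X)_{ij}=\operatorname{tr}[X(\sigma_i\otimes\sigma_j)]$, $i,j\in\{1,2,3\}$, $\sigma_i$ the Pauli matrices. *)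

(* Defs.v *)
From HB Require Import structures.
From mathcomp Require Import all_boot all_order all_algebra.
From mathcomp Require Import complex mxtens.
From mathcomp Require Import classical_sets reals.

Set Implicit Arguments.
Unset Strict Implicit.
Unset Printing Implicit Defensive.

Import Order.TTheory GRing.Theory Num.Theory.
Local Open Scope ring_scope.

Section QuantumDefs.
Variable R : realType.
Local Notation C := R[i].

Definition adj {m n} (A : 'M[C]_(m, n)) : 'M[C]_(n, m) := (map_mx Num.conj A)^T.

(* Positive semidefinite: Hermitian and <v, A v> >= 0 for all v
   (the order on C = R[i] means: real and nonnegative). *)
Definition psd {n} (A : 'M[C]_n) : Prop :=
  adj A = A /\ forall v : 'cV[C]_n, 0 <= (adj v *m A *m v) 0 0.

Definition density {n} (A : 'M[C]_n) : Prop := psd A /\ \tr A = 1.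

(* Block (i,j) of an operator X on C^n (x) C^2 (first factor = outer index),
   i.e. X = \sum_{i,j} |i><j| (x) blk i j X. *)
Definition blk {n} (i j : 'I_n) (X : 'M[C]_(n * 2)) : 'M[C]_2 :=
  \matrix_(k, l) X (mxtens_index (i, k)) (mxtens_index (j, l)).

Definition ampl n (Psi : 'M[C]_2 -> 'M[C]_2) (X : 'M[C]_(n * 2)) : 'M[C]_(n * 2) :=
  \sum_(i < n) \sum_(j < n) (delta_mx i j *t Psi (blk i j X)).

Definition linear_map (Psi : 'M[C]_2 -> 'M[C]_2) : Prop :=
  forall (a : C) (A B : 'M[C]_2), Psi (a *: A + B) = a *: Psi A + Psi B.

Definition completely_positive (Psi : 'M[C]_2 -> 'M[C]_2) : Prop :=
  forall (n : nat) (X : 'M[C]_(n * 2)), psd X -> psd (ampl Psi X).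

Definition trace_preserving (Psi : 'M[C]_2 -> 'M[C]_2) : Prop :=
  forall A : 'M[C]_2, \tr (Psi A) = \tr A.

Definition channel (Psi : 'M[C]_2 -> 'M[C]_2) : Prop :=
  [/\ linear_map Psi, completely_positive Psi & trace_preserving Psi].

Definition separable (rho : 'M[C]_(2 * 2)) : Prop :=
  exists (m : nat) (p : 'I_m -> R) (s w : 'I_m -> 'M[C]_2),
    [/\ forall k, 0 <= p k,
        forall k, density (s k),
        forall k, density (w k) &
        rho = \sum_(k < m) (p k)%:C%C *: (s k *t w k)].

Definition entanglement_breaking (Psi : 'M[C]_2 -> 'M[C]_2) : Prop :=
  channel Psi /\
  forall rho : 'M[C]_(2 * 2), density rho -> separable (ampl Psi rho).

Definition Pplus : 'M[C]_(2 * 2) :=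
  \sum_(i < 2) \sum_(j < 2) (delta_mx i j *t (delta_mx i j : 'M[C]_2)).

Definition choi (Psi : 'M[C]_2 -> 'M[C]_2) : 'M[C]_(2 * 2) := ampl Psi Pplus.

Definition ptrace1 (X : 'M[C]_(2 * 2)) : 'M[C]_2 := \sum_(i < 2) blk i i X.

(* Pauli matrices sigma_1, sigma_2, sigma_3 (indexed by 'I_3 = {0,1,2}). *)
Definition pauli (a : 'I_3) : 'M[C]_2 :=
  \matrix_(k < 2, l < 2)
    (if val a == 0%N then (if k != l then 1 else 0)
     else if val a == 1%N then
       (if (val k == 0%N) && (val l == 1%N) then - Complex 0 1
        else if (val k == 1%N) && (val l == 0%N) then Complex 0 1 else 0)
     else (if k == l then (if val k == 0%N then 1 else -1) else 0)).

(* Bloch vector and correlation matrix.  The traces are real for the Hermitian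
   operators they are applied to; we record their real parts. *)
Definition bloch (X : 'M[C]_2) : 'cV[R]_3 :=
  \col_a complex.Re (\tr (pauli a *m X)).

Definition corr (X : 'M[C]_(2 * 2)) : 'M[R]_3 :=
  \matrix_(a, b) complex.Re (\tr (X *m (pauli a *t pauli b))).

Definition enorm (v : 'cV[R]_3) : R := Num.sqrt (\sum_(a < 3) v a 0 ^+ 2).

Definition opnorm (M : 'M[R]_3) : R :=
  sup [set enorm (M *m x) | x in [set x : 'cV[R]_3 | enorm x <= 1]].

End QuantumDefs.

(* Main.v *)
Require Import Defs.
From HB Require Import structures.
From mathcomp Require Import all_boot all_order all_algebra.
From mathcomp Require Import complex mxtens.
From mathcomp Require Import classical_sets reals.
From mathcomp Require Import ring lra.
Import Order.TTheory GRing.Theory Num.Theory.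
Local Open Scope ring_scope.

Section S.
Variable R : realType.
Local Notation C := R[i].

Lemma conjE (x : C) : Num.conj x = (x^*)%C.
Proof.
have [->|nz] := eqVneq x 0; first by rewrite rmorph0 conjc0.
by apply: (mulfI nz); rewrite -normCK sqr_normc.
Qed.

Lemma adj_mul m n p (A : 'M[C]_(m,n)) (B : 'M[C]_(n,p)) :
  adj (A *m B) = adj B *m adj A.
Proof. by rewrite /adj map_mxM trmx_mul. Qed.

Lemma adjK m n (A : 'M[C]_(m,n)) : adj (adj A) = A.
Proof. by apply/matrixP=> i j; rewrite /adj !mxE conjCK. Qed.

Lemma adjZ m n (c : C) (A : 'M[C]_(m,n)) : adj (c *: A) = Num.conj c *: adj A.
Proof. by apply/matrixP=> i j; rewrite /adj !mxE rmorphM. Qed.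

Lemma tr_adj n (A : 'M[C]_n) : \tr (adj A) = Num.conj (\tr A).
Proof.
rewrite /adj mxtrace_tr /mxtrace rmorph_sum; apply: eq_bigr => i _.
by rewrite mxE.
Qed.

Lemma tr_herm_real n (X Y : 'M[C]_n) : adj X = X -> adj Y = Y ->
  \tr (X *m Y) = (complex.Re (\tr (X *m Y)))%:C%C.
Proof.
move=> hX hY; rewrite RRe_real // CrealE; apply/eqP.
by rewrite -tr_adj adj_mul hX hY mxtrace_mulC.
Qed.

Lemma Re_add (x y : C) : complex.Re (x + y) = complex.Re x + complex.Re y.
Proof. by case: x; case: y. Qed.

Lemma Re_sum I (r : seq I) (P : pred I) (F : I -> C) :
  complex.Re (\sum_(k <- r | P k) F k) = \sum_(k <- r | P k) complex.Re (F k).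
Proof. exact: (big_morph _ Re_add). Qed.

Lemma Re_mulr (a : R) (z : C) : complex.Re (a%:C%C * z) = a * complex.Re z.
Proof. by case: z => x y /=; rewrite mul0r subr0. Qed.

Lemma sum_tens m n (F : 'I_(m*n) -> C) :
  \sum_k F k = \sum_(i < m) \sum_(j < n) F (mxtens_index (i, j)).
Proof.
rewrite pair_big /= (reindex (@mxtens_index m n)) /=; last first.
  by exists (@mxtens_unindex m n) => x _; [apply: mxtens_indexK|apply: mxtens_unindexK].
by apply: eq_bigr => -[i j].
Qed.

Lemma blk_sum n (i j : 'I_n) I (r : seq I) (P : pred I) (F : I -> 'M[C]_(n*2)) :
  blk i j (\sum_(k <- r | P k) F k) = \sum_(k <- r | P k) blk i j (F k).
Proof. apply/matrixP=> k l; rewrite !mxE !summxE; apply: eq_bigr => x _; by rewrite mxE. Qed.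

Lemma blkZ n (i j : 'I_n) c (X : 'M[C]_(n*2)) : blk i j (c *: X) = c *: blk i j X.
Proof. by apply/matrixP=> k l; rewrite !mxE. Qed.

Lemma blk_tens n (i j : 'I_n) (A : 'M[C]_n) (B : 'M[C]_2) : blk i j (A *t B) = A i j *: B.
Proof. by apply/matrixP=> k l; rewrite mxE tensmxE mxE. Qed.

Lemma sum_delta2 n (V : nmodType) (i j : 'I_n) (G : 'I_n -> 'I_n -> V) (f : C -> V -> V) :
  (forall v, f 0 v = 0) -> (forall v, f 1 v = v) ->
  \sum_(i' < n) \sum_(j' < n) f (delta_mx i' j' i j) (G i' j') = G i j.
Proof.
move=> f0 f1.
rewrite (bigD1 i) //= [X in _ + X]big1 ?addr0; last first.
  move=> i' /negbTE hi'; rewrite big1 // => j' _.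
  by rewrite mxE eq_sym hi' /= f0.
rewrite (bigD1 j) //= [X in _ + X]big1 ?addr0; last first.
  by move=> j' /negbTE hj'; rewrite mxE eq_sym hj' andbF f0.
by rewrite mxE !eqxx f1.
Qed.

Lemma blk_ampl n Psi (X : 'M[C]_(n*2)) (i j : 'I_n) : blk i j (ampl Psi X) = Psi (blk i j X).
Proof.
rewrite /ampl blk_sum.
under eq_bigr => i' _ do rewrite blk_sum.
under eq_bigr => i' _ do under eq_bigr => j' _ do rewrite blk_tens.
by apply: (@sum_delta2 n _ i j (fun i' j' => Psi (blk i' j' X)) (fun c v => c *: v)) => v; rewrite ?scale0r ?scale1r.
Qed.

Lemma lin0 (Psi : 'M[C]_2 -> 'M[C]_2) : linear_map Psi -> Psi 0 = 0.
Proof.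
move=> h; have := h 1 0 0; rewrite scaler0 addr0 scale1r => E.
by apply/esym/(addrI (Psi 0)); rewrite addr0 {1}E.
Qed.

Lemma linZ (Psi : 'M[C]_2 -> 'M[C]_2) c A : linear_map Psi -> Psi (c *: A) = c *: Psi A.
Proof. by move=> h; have := h c A 0; rewrite !addr0 lin0 // addr0. Qed.

Lemma tensmxZr m n p q (A : 'M[C]_(m,n)) c (B : 'M[C]_(p,q)) : A *t (c *: B) = c *: (A *t B).
Proof. by apply/matrixP=> k l; rewrite !mxE mulrCA. Qed.

Lemma ampl_scale n Psi c (X : 'M[C]_(n*2)) : linear_map Psi ->
  ampl Psi (c *: X) = c *: ampl Psi X.
Proof.
move=> h; rewrite /ampl scaler_sumr; apply: eq_bigr => i _.
rewrite scaler_sumr; apply: eq_bigr => j _.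
by rewrite blkZ linZ // tensmxZr.
Qed.


Lemma tr_delta n (i j : 'I_n) : \tr (delta_mx i j : 'M[C]_n) = (i == j)%:R.
Proof.
rewrite /mxtrace (bigD1 i) //= big1 ?addr0; first by rewrite mxE eqxx /= eq_sym.
by move=> k /negbTE hk; rewrite mxE hk.
Qed.

Lemma blk_Pplus (i j : 'I_2) : blk i j (Pplus R) = delta_mx i j.
Proof.
rewrite /Pplus blk_sum.
under eq_bigr => i' _ do rewrite blk_sum.
under eq_bigr => i' _ do under eq_bigr => j' _ do rewrite blk_tens.
by apply: (@sum_delta2 2 _ i j (fun i' j' => delta_mx i' j') (fun c v => c *: v)) => v;
  rewrite ?scale0r ?scale1r.
Qed.

Lemma tr_blk n (X : 'M[C]_(n*2)) : \tr X = \sum_(i < n) \tr (blk i i X).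
Proof.
rewrite /mxtrace sum_tens; apply: eq_bigr => i _; apply: eq_bigr => a _.
by rewrite mxE.
Qed.

Lemma tr_Pplus : \tr (Pplus R) = 2.
Proof.
rewrite tr_blk; under eq_bigr => i _ do rewrite blk_Pplus tr_delta eqxx.
by rewrite sumr_const card_ord.
Qed.

Lemma blkE n (X : 'M[C]_(n*2)) i j a b :
  X (mxtens_index (i, a)) (mxtens_index (j, b)) = blk i j X a b.
Proof. by rewrite mxE. Qed.

Lemma psd_gram n m (A : 'M[C]_(n, m)) : psd (A *m adj A).
Proof.
split; first by rewrite adj_mul adjK.
move=> v; have -> : adj v *m (A *m adj A) *m v = (adj v *m A) *m adj (adj v *m A).
  by rewrite adj_mul adjK !mulmxA.
rewrite mxE; apply: sumr_ge0 => k _.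
by rewrite /adj !mxE mul_conjC_ge0.
Qed.

Lemma psd_scale n (c : C) (X : 'M[C]_n) : 0 <= c -> psd X -> psd (c *: X).
Proof.
move=> c0 [h1 h2]; split; first by rewrite adjZ h1 geC0_conj.
move=> v; rewrite -scalemxAr -scalemxAl mxE mulr_ge0 //.
Qed.

Definition Phi : 'cV[C]_(2*2) :=
  \col_k (((mxtens_unindex k).1 == (mxtens_unindex k).2)%:R).

Lemma Pplus_gram : Pplus R = Phi *m adj Phi.
Proof.
apply/matrixP=> k l.
case: (mxtens_indexP k) => i a; case: (mxtens_indexP l) => j b.
rewrite blkE blk_Pplus !mxE big_ord1 /adj !mxE !mxtens_indexK /=.
rewrite conjC_nat -natrM mulnb; congr (_%:R).
by rewrite eq_sym [b == j]eq_sym.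
Qed.

Lemma density_rho : density ((2%:R)^-1 *: Pplus R).
Proof.
split; last by rewrite mxtraceZ tr_Pplus mulVf // pnatr_eq0.
apply: psd_scale; first by rewrite invr_ge0 ler0n.
rewrite Pplus_gram; exact: psd_gram.
Qed.

Lemma tens11 : (1%:M : 'M[C]_2) *t (1%:M : 'M[C]_2) = 1%:M.
Proof.
apply/matrixP=> k l.
case: (mxtens_indexP k) => i a; case: (mxtens_indexP l) => j b.
rewrite tensmxE !mxE (inj_eq (can_inj (@mxtens_indexK 2 2))) xpair_eqE.
by rewrite -natrM mulnb.
Qed.

Lemma tr_ptrace (X : 'M[C]_(2*2)) (B : 'M[C]_2) :
  \tr (X *m (1%:M *t B)) = \tr (ptrace1 X *m B).
Proof.
rewrite /mxtrace sum_tens.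
under eq_bigr => i _ do under eq_bigr => a _ do rewrite mxE sum_tens.
rewrite exchange_big /=; apply: eq_bigr => a _.
rewrite mxE; under [RHS]eq_bigr => b _ do rewrite /ptrace1 summxE mulr_suml.
rewrite [RHS]exchange_big /=; apply: eq_bigr => i _.
rewrite (bigD1 i) //= [X in _ + X]big1 ?addr0; last first.
  move=> j /negbTE hj; apply: big1 => b _.
  by rewrite tensmxE mxE hj mul0r mulr0.
by apply: eq_bigr => b _; rewrite tensmxE !mxE eqxx mul1r.
Qed.

Local Notation o0 := (@ord0 1).
Local Notation o1 := (lift (@ord0 1) (@ord0 0)).
Local Notation q0 := (@ord0 2).
Local Notation q1 := (lift (@ord0 2) (@ord0 1)).
Local Notation q2 := (lift (@ord0 2) (lift (@ord0 1) (@ord0 0))).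

Lemma trP0 (A : 'M[C]_2) : \tr (pauli R q0 *m A) = A o1 o0 + A o0 o1.
Proof.
rewrite /mxtrace !big_ord_recl big_ord0 !mxE !big_ord_recl !big_ord0 !mxE /=.
ring.
Qed.
Lemma trP1 (A : 'M[C]_2) : \tr (pauli R q1 *m A) = - 'i%C * A o1 o0 + 'i%C * A o0 o1.
Proof.
rewrite /mxtrace !big_ord_recl big_ord0 !mxE !big_ord_recl !big_ord0 !mxE /=.
ring.
Qed.
Lemma trP2 (A : 'M[C]_2) : \tr (pauli R q2 *m A) = A o0 o0 - A o1 o1.
Proof.
rewrite /mxtrace !big_ord_recl big_ord0 !mxE !big_ord_recl !big_ord0 !mxE /=.
ring.
Qed.

Lemma quad2 (s : 'M[C]_2) (v : 'cV[C]_2) : (adj v *m s *m v) 0 0 =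
  Num.conj (v o0 0) * s o0 o0 * v o0 0 + Num.conj (v o0 0) * s o0 o1 * v o1 0 +
  Num.conj (v o1 0) * s o1 o0 * v o0 0 + Num.conj (v o1 0) * s o1 o1 * v o1 0.
Proof.
rewrite !mxE !big_ord_recl !big_ord0 !mxE !big_ord_recl !big_ord0 /adj !mxE.
ring.
Qed.

Lemma dens2 (s : 'M[C]_2) : density s -> exists x u v : R,
  [/\ s o0 o0 = x%:C%C, s o1 o1 = (1 - x)%:C%C, s o0 o1 = (u +i* v)%C,
      s o1 o0 = (u -i* v)%C & u ^+ 2 + v ^+ 2 <= x * (1 - x)].
Proof.
move=> [[hh hpsd] htr].
have herm i j : Num.conj (s j i) = s i j.
  by have := congr1 (fun M : 'M[C]_2 => M i j) hh; rewrite /adj !mxE.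
have tr2 : s o0 o0 + s o1 o1 = 1.
  by rewrite -htr /mxtrace !big_ord_recl big_ord0 addr0.
have q1 := hpsd (\col_i (if i == o0 then s o0 o1 else - s o0 o0)).
have q2 := hpsd (\col_i (if i == o0 then - s o1 o1 else s o1 o0)).
rewrite quad2 !mxE /= in q1.
rewrite quad2 !mxE /= in q2.
have h00 := herm o0 o0; have h11 := herm o1 o1; have h01 := herm o0 o1.
move: (s o0 o0) (s o1 o1) (s o0 o1) (s o1 o0) h00 h11 h01 tr2 q1 q2.
move=> [x0 y0] [x1 y1] [x2 y2] [x3 y3].
rewrite !conjE; simpc => h00 h11 h01 tr2 q1 q2.
case: h00 => hy0; case: h11 => hy1; case: h01 => hx3 hy3; case: tr2 => hx hy.
move/andP: q1 => [_ q1]; move/andP: q2 => [_ q2].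
have y0z : y0 = 0 by lra.
have y1z : y1 = 0 by lra.
have x1e : x1 = 1 - x0 by lra.
have y3e : y3 = - y2 by lra.
rewrite y0z y1z x1e y3e hx3 in q1 q2 *.
exists x0, x2, y2; split => //.
nra.
Qed.


Lemma ord2P (a : 'I_2) : a = o0 \/ a = o1.
Proof. by case: a => [[|[|]]] // ?; [left|right]; apply: val_inj. Qed.

Definition bl (s : 'M[C]_2) (i : 'I_3) : R := complex.Re (\tr (pauli R i *m s)).

Lemma bl_vals (s : 'M[C]_2) x u v : s o0 o0 = x%:C%C -> s o1 o1 = (1 - x)%:C%C ->
  s o0 o1 = (u +i* v)%C -> s o1 o0 = (u -i* v)%C ->
  [/\ bl s q0 = 2 * u, bl s q1 = - (2 * v) & bl s q2 = 2 * x - 1].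
Proof.
move=> e00 e11 e01 e10; rewrite /bl trP0 trP1 trP2 e00 e11 e01 e10 /=.
split; lra.
Qed.

Lemma bloch_dens s : density s -> \sum_(i < 3) bl s i ^+ 2 <= 1.
Proof.
move=> hs; have [x [u [v [e00 e11 e01 e10 h]]]] := dens2 s hs.
have [b0 b1 b2] := bl_vals _ _ _ _ e00 e11 e01 e10.
rewrite !big_ord_recl big_ord0 b0 b1 b2; nra.
Qed.

Lemma pauli_exp s : density s ->
  s = (2^-1)%:C%C *: (1%:M + \sum_(i < 3) (bl s i)%:C%C *: pauli R i).
Proof.
move=> hs; have [x [u [v [e00 e11 e01 e10 h]]]] := dens2 s hs.
have [b0 b1 b2] := bl_vals _ _ _ _ e00 e11 e01 e10.
apply/matrixP => a b; rewrite !mxE summxE !big_ord_recl big_ord0 !mxE b0 b1 b2 /=.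
case: (ord2P a) => ->; case: (ord2P b) => -> /=;
 rewrite ?e00 ?e11 ?e01 ?e10; apply/eqP; rewrite eq_complex /=; apply/andP; split; apply/eqP; lra.
Qed.

End S.

Section S.
Variable R : realType.
Local Notation C := R[i].
Local Notation bl := (bl R).

Lemma tensmxDl m n p q (A A' : 'M[C]_(m,n)) (B : 'M[C]_(p,q)) :
  (A + A') *t B = A *t B + A' *t B.
Proof. by apply/matrixP=> k l; rewrite !mxE mulrDl. Qed.
Lemma tensmxDr m n p q (A : 'M[C]_(m,n)) (B B' : 'M[C]_(p,q)) :
  A *t (B + B') = A *t B + A *t B'.
Proof. by apply/matrixP=> k l; rewrite !mxE mulrDr. Qed.
Lemma tensmxZl m n p q c (A : 'M[C]_(m,n)) (B : 'M[C]_(p,q)) :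
  (c *: A) *t B = c *: (A *t B).
Proof. by apply/matrixP=> k l; rewrite !mxE mulrA. Qed.
Lemma tensmx_suml m n p q I (r : seq I) (P : pred I) (F : I -> 'M[C]_(m,n)) (B : 'M[C]_(p,q)) :
  (\sum_(k <- r | P k) F k) *t B = \sum_(k <- r | P k) (F k *t B).
Proof.
apply/matrixP=> k l; rewrite !mxE !summxE mulr_suml; apply: eq_bigr => x _.
by rewrite !mxE.
Qed.
Lemma tensmx_sumr m n p q I (r : seq I) (P : pred I) (A : 'M[C]_(m,n)) (F : I -> 'M[C]_(p,q)) :
  A *t (\sum_(k <- r | P k) F k) = \sum_(k <- r | P k) (A *t F k).
Proof.
apply/matrixP=> k l; rewrite !mxE !summxE mulr_sumr; apply: eq_bigr => x _.
by rewrite !mxE.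
Qed.

Definition g (tau : 'M[C]_(2*2)) (A B : 'M[C]_2) := \tr (tau *m (A *t B)).

Lemma g_expand tau (a b : 'I_3 -> R) :
  g tau (1%:M + \sum_(i < 3) (a i)%:C%C *: pauli R i) (1%:M + \sum_(j < 3) (b j)%:C%C *: pauli R j)
  = g tau 1%:M 1%:M + \sum_(j < 3) (b j)%:C%C * g tau 1%:M (pauli R j)
    + \sum_(i < 3) (a i)%:C%C * g tau (pauli R i) 1%:M
    + \sum_(i < 3) \sum_(j < 3) ((a i)%:C%C * (b j)%:C%C) * g tau (pauli R i) (pauli R j).
Proof.
rewrite /g tensmxDl !tensmxDr !mulmxDr !raddfD /= !addrA.
congr (_ + _ + _ + _).
- rewrite tensmx_sumr mulmx_sumr raddf_sum /=; apply: eq_bigr => j _.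
  by rewrite tensmxZr -scalemxAr mxtraceZ.
- rewrite tensmx_suml mulmx_sumr raddf_sum /=; apply: eq_bigr => i _.
  by rewrite tensmxZl -scalemxAr mxtraceZ.
- rewrite tensmx_suml mulmx_sumr raddf_sum /=; apply: eq_bigr => i _.
  rewrite tensmxZl tensmx_sumr -scalemxAr mxtraceZ mulmx_sumr raddf_sum /= mulr_sumr.
  apply: eq_bigr => j _.
  by rewrite tensmxZr -scalemxAr mxtraceZ mulrA.
Qed.


Lemma g_scale tau (c d : C) A B : g tau (c *: A) (d *: B) = c * (d * g tau A B).
Proof. by rewrite /g tensmxZl tensmxZr !scalerA -scalemxAr mxtraceZ mulrA. Qed.

Lemma Re_g_dens tau s w : density s -> density w -> \tr tau = 1 ->
  complex.Re (g tau s w) = 2^-1 * (2^-1 * (1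
    + \sum_(j < 3) bl w j * complex.Re (g tau 1%:M (pauli R j))
    + \sum_(i < 3) bl s i * complex.Re (g tau (pauli R i) 1%:M)
    + \sum_(i < 3) \sum_(j < 3) (bl s i * bl w j) * complex.Re (g tau (pauli R i) (pauli R j)))).
Proof.
move=> hs hw htr.
have -> : g tau s w = g tau ((2^-1)%:C%C *: (1%:M + \sum_(i < 3) (bl s i)%:C%C *: pauli R i))
   ((2^-1)%:C%C *: (1%:M + \sum_(j < 3) (bl w j)%:C%C *: pauli R j)).
  by rewrite -(pauli_exp _ s hs) -(pauli_exp _ w hw).
rewrite g_scale g_expand.
have -> : g tau 1%:M 1%:M = 1 by rewrite /g tens11 mulmx1.
rewrite !Re_mulr !Re_add !Re_sum.
congr (_ * (_ * (_ + _ + _ + _))).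
- by apply: eq_bigr => j _; rewrite Re_mulr.
- by apply: eq_bigr => i _; rewrite Re_mulr.
- apply: eq_bigr => i _; rewrite Re_sum; apply: eq_bigr => j _.
  by rewrite -rmorphM /= Re_mulr.
Qed.

End S.

Section S.
Variable R : realType.

Lemma lam_sqrt (X Q : R) : 0 <= Q -> (forall l, 0 < l -> 2 * l * X <= l ^+ 2 + Q) ->
  X <= Num.sqrt Q.
Proof.
move=> hQ h; have [hpos|hle] := ltrP 0 (Num.sqrt Q).
  have := h _ hpos; have := sqr_sqrtr hQ.
  move: (Num.sqrt Q) hpos => s hpos e H.
  rewrite -e in H; nra.
have s0 : Num.sqrt Q = 0 by apply/le_anti; rewrite hle sqrtr_ge0.
rewrite s0; have : Q <= 0 by rewrite -sqrtr_eq0 s0.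
move=> hQ'; have Q0 : Q = 0 by apply/le_anti; rewrite hQ' hQ.
rewrite Q0 in h; rewrite leNgt; apply/negP => hX.
have := h _ hX; nra.
Qed.

Lemma per_k (a b t : 'I_3 -> R) (N : 'I_3 -> 'I_3 -> R) (K l : R) :
  \sum_(i < 3) a i ^+ 2 <= 1 -> \sum_(j < 3) b j ^+ 2 <= 1 ->
  \sum_(j < 3) (\sum_(i < 3) a i * N i j) ^+ 2 <= K ^+ 2 * \sum_(i < 3) a i ^+ 2 ->
  2 * l * (\sum_(j < 3) b j * t j + \sum_(i < 3) \sum_(j < 3) (a i * b j) * N i j)
  <= l ^+ 2 + (\sum_(j < 3) t j ^+ 2 + K ^+ 2)
     + 2 * \sum_(i < 3) a i * (\sum_(j < 3) t j * N i j).
Proof.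
rewrite !big_ord_recl !big_ord0 !addr0.
set a0 := a _; set a1 := a _; set a2 := a _.
set b0 := b _; set b1 := b _; set b2 := b _.
set t0 := t _; set t1 := t _; set t2 := t _.
set y0 := (a0 * N _ _ + _); set y1 := (a0 * N _ _ + _); set y2 := (a0 * N _ _ + _).
move=> ha hb hy.
have e1 := sqr_ge0 (l * b0 - (t0 + y0)).
have e2 := sqr_ge0 (l * b1 - (t1 + y1)).
have e3 := sqr_ge0 (l * b2 - (t2 + y2)).
have e4 : l ^+ 2 * (b0 ^+ 2 + (b1 ^+ 2 + b2 ^+ 2)) <= l ^+ 2.
  by rewrite -[X in _ <= X]mulr1 ler_wpM2l ?sqr_ge0.
have e5 : K ^+ 2 * (a0 ^+ 2 + (a1 ^+ 2 + a2 ^+ 2)) <= K ^+ 2.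
  by rewrite -[X in _ <= X]mulr1 ler_wpM2l ?sqr_ge0.
rewrite /y0 /y1 /y2 in e1 e2 e3 hy.
nra.
Qed.


Lemma sum_lin0 m (p : 'I_m -> R) (a : 'I_m -> 'I_3 -> R) (c : 'I_3 -> R) :
  (forall i, \sum_(k < m) p k * a k i = 0) ->
  \sum_(k < m) p k * (\sum_(i < 3) a k i * c i) = 0.
Proof.
move=> h.
under eq_bigr => k _ do rewrite mulr_sumr.
rewrite exchange_big /= big1 // => i _.
under eq_bigr => k _ do rewrite mulrA.
by rewrite -mulr_suml h mul0r.
Qed.

Lemma main_ineq m (p : 'I_m -> R) (a b : 'I_m -> 'I_3 -> R) (t r : 'I_3 -> R)
  (N : 'I_3 -> 'I_3 -> R) (K : R) :
  (forall k, 0 <= p k) -> \sum_(k < m) p k = 1 ->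
  (forall k, \sum_(i < 3) a k i ^+ 2 <= 1) -> (forall k, \sum_(j < 3) b k j ^+ 2 <= 1) ->
  (forall i, \sum_(k < m) p k * a k i = 0) ->
  (forall x : 'I_3 -> R, \sum_(j < 3) (\sum_(i < 3) x i * N i j) ^+ 2
                          <= K ^+ 2 * \sum_(i < 3) x i ^+ 2) ->
  2 * \sum_(k < m) p k * (2^-1 * (2^-1 * (1 + \sum_(j < 3) b k j * t j
       + \sum_(i < 3) a k i * r i
       + \sum_(i < 3) \sum_(j < 3) (a k i * b k j) * N i j)))
  <= (1 + Num.sqrt (\sum_(j < 3) t j ^+ 2 + K ^+ 2)) / 2.
Proof.
move=> p0 p1 ha hb hpa hN.
set T := fun k => \sum_(j < 3) b k j * t j + \sum_(i < 3) \sum_(j < 3) (a k i * b k j) * N i j.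
set X := \sum_(k < m) p k * T k.
set Q := \sum_(j < 3) t j ^+ 2 + K ^+ 2.
have hQ : 0 <= Q by rewrite addr_ge0 ?sqr_ge0 // sumr_ge0 // => j _; rewrite sqr_ge0.
have -> : \sum_(k < m) p k * (2^-1 * (2^-1 * (1 + \sum_(j < 3) b k j * t j
       + \sum_(i < 3) a k i * r i
       + \sum_(i < 3) \sum_(j < 3) (a k i * b k j) * N i j)))
   = 2^-1 * (2^-1 * (\sum_(k < m) p k + X + \sum_(k < m) p k * (\sum_(i < 3) a k i * r i))).
  rewrite /X /T -!big_split /= !mulr_sumr; apply: eq_bigr => k _; ring.
rewrite p1 sum_lin0 // addr0.
suff : X <= Num.sqrt Q by lra.
apply: lam_sqrt => // l l0.
have step : forall k, p k * (2 * l * T k) <= p k * (l ^+ 2 + Q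
     + 2 * \sum_(i < 3) a k i * (\sum_(j < 3) t j * N i j)).
  move=> k; apply: ler_wpM2l => //; exact: per_k.
have H1 := ler_sum (index_enum _) (fun k _ => step k).
have H2 : \sum_(k < m) p k * (l ^+ 2 + Q
     + 2 * \sum_(i < 3) a k i * (\sum_(j < 3) t j * N i j)) = l ^+ 2 + Q.
  under eq_bigr => k _ do rewrite mulrDr.
  rewrite big_split /= -mulr_suml p1 mul1r.
  under eq_bigr => k _ do rewrite mulrCA.
  by rewrite -mulr_sumr sum_lin0 // mulr0 addr0.
have H3 : \sum_(k < m) p k * (2 * l * T k) = 2 * l * X.
  under eq_bigr => k _ do rewrite mulrCA.
  by rewrite -mulr_sumr.
by rewrite -H3 -H2.
Qed.

End S.

Section S.
Variable R : realType.

Definition esq (v : 'cV[R]_3) := \sum_(a < 3) v a 0 ^+ 2.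

Lemma esq_ge0 v : 0 <= esq v.
Proof. by apply: sumr_ge0 => a _; rewrite sqr_ge0. Qed.

Lemma enormE v : enorm v = Num.sqrt (esq v).
Proof. by []. Qed.

Lemma CS3 (x0 x1 x2 z0 z1 z2 : R) :
  (x0 * z0 + (x1 * z1 + x2 * z2)) ^+ 2 <= (x0 ^+ 2 + (x1 ^+ 2 + x2 ^+ 2)) * (z0 ^+ 2 + (z1 ^+ 2 + z2 ^+ 2)).
Proof.
have e1 := sqr_ge0 (x0 * z1 - x1 * z0).
have e2 := sqr_ge0 (x0 * z2 - x2 * z0).
have e3 := sqr_ge0 (x1 * z2 - x2 * z1).
nra.
Qed.

Lemma row_bound (N : 'M[R]_3) (x : 'cV[R]_3) i : esq x <= 1 ->
  (N *m x) i 0 ^+ 2 <= \sum_(j < 3) N i j ^+ 2.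
Proof.
rewrite /esq mxE !big_ord_recl !big_ord0 !addr0 => hx.
set S := (_ + (_ + _)) in hx.
have h := CS3 (N i ord0) (N i (lift ord0 ord0)) (N i (lift ord0 (lift ord0 ord0)))
   (x ord0 0) (x (lift ord0 ord0) 0) (x (lift ord0 (lift ord0 ord0)) 0).
apply: (le_trans h); rewrite -[X in _ <= X]mulr1 ler_wpM2l //.
by rewrite addr_ge0 ?sqr_ge0 // addr_ge0 ?sqr_ge0.
Qed.

Lemma opnorm_ub (N : 'M[R]_3) (x : 'cV[R]_3) : enorm x <= 1 -> enorm (N *m x) <= opnorm N.
Proof.
move=> hx; apply: ub_le_sup; last by exists x.
exists (Num.sqrt (\sum_(i < 3) \sum_(j < 3) N i j ^+ 2)).
move=> _ [y hy <-]; rewrite enormE ler_wsqrtr // /esq.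
apply: ler_sum => i _; apply: row_bound.
by move: hy; rewrite /= enormE -[X in _ <= X -> _]sqrtr1 ler_sqrt.
Qed.


Lemma esqZ c v : esq (c *: v) = c ^+ 2 * esq v.
Proof. rewrite /esq mulr_sumr; apply: eq_bigr => a _; by rewrite mxE exprMn. Qed.

Lemma opnorm_ge0 (N : 'M[R]_3) : 0 <= opnorm N.
Proof.
apply: le_trans (@opnorm_ub N 0 _); first exact: sqrtr_ge0.
rewrite enormE /esq big1 ?sqrtr0 // => a _; by rewrite mxE expr0n.
Qed.

Lemma opnorm_sq (N : 'M[R]_3) (y : 'cV[R]_3) :
  esq (N *m y) <= opnorm N ^+ 2 * esq y.
Proof.
have K0 := opnorm_ge0 N.
have [e0|epos] := eqVneq (esq y) 0.
  have y0 : y = 0.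
    apply/matrixP => a b; rewrite ord1 mxE.
    have := psumr_eq0P (fun a _ => sqr_ge0 (y a 0)) e0 (i := a) isT.
    by move/eqP; rewrite sqrf_eq0 => /eqP.
  have z : esq (0 : 'cV[R]_3) = 0 by rewrite /esq big1 // => a _; rewrite mxE expr0n.
  by rewrite y0 mulmx0 z mulr0.
have ep : 0 < esq y by rewrite lt_def epos esq_ge0.
set n := Num.sqrt (esq y).
have n0 : 0 < n by rewrite sqrtr_gt0.
have nn : n ^+ 2 = esq y by rewrite sqr_sqrtr // esq_ge0.
have hx : enorm (n^-1 *: y) <= 1.
  by rewrite enormE esqZ -nn exprVn mulVf ?sqrtr1 // expf_neq0 // gt_eqF.
have := @opnorm_ub N _ hx; rewrite -scalemxAr enormE esqZ.
set E := esq (N *m y).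
have E0 : 0 <= E by exact: esq_ge0.
move=> h.
have h2 : n^-1 ^+ 2 * E <= opnorm N ^+ 2.
  have s0 := sqrtr_ge0 (n^-1 ^+ 2 * E).
  have := sqr_sqrtr (mulr_ge0 (sqr_ge0 (n^-1)) E0).
  move: (Num.sqrt (n^-1 ^+ 2 * E)) s0 h => s s0 h e.
  rewrite -e; nra.
rewrite exprVn in h2.
rewrite -nn.
have -> : E = n ^+ 2 * (n ^-2 * E) by rewrite mulrA mulfV ?mul1r // expf_neq0 // gt_eqF.
by rewrite mulrC ler_wpM2r // sqr_ge0.
Qed.


Lemma CSf (x z : 'I_3 -> R) :
  (\sum_(i < 3) x i * z i) ^+ 2 <= (\sum_(i < 3) x i ^+ 2) * (\sum_(i < 3) z i ^+ 2).
Proof. rewrite !big_ord_recl !big_ord0 !addr0; exact: CS3. Qed.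

Lemma opnorm_tr (N : 'M[R]_3) (x : 'I_3 -> R) :
  \sum_(j < 3) (\sum_(i < 3) x i * N i j) ^+ 2 <= opnorm N ^+ 2 * \sum_(i < 3) x i ^+ 2.
Proof.
set y := fun j => \sum_(i < 3) x i * N i j.
set z := fun i => \sum_(j < 3) N i j * y j.
have hY : \sum_(j < 3) y j ^+ 2 = \sum_(i < 3) x i * z i.
  under eq_bigr => j _ do rewrite expr2 {1}/y mulr_suml.
  rewrite exchange_big /=; apply: eq_bigr => i _.
  rewrite /z mulr_sumr; apply: eq_bigr => j _; ring.
have hCS := CSf x z.
have F := opnorm_sq N (\col_j y j).
have eF : esq (N *m \col_j y j) = \sum_(i < 3) z i ^+ 2.
  rewrite /esq; apply: eq_bigr => i _; rewrite mxE /z; congr (_ ^+ 2).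
  by apply: eq_bigr => j _; rewrite mxE.
have eY : esq (\col_j y j) = \sum_(j < 3) y j ^+ 2.
  by rewrite /esq; apply: eq_bigr => j _; rewrite mxE.
rewrite eF eY in F.
have Sx0 : 0 <= \sum_(i < 3) x i ^+ 2 by apply: sumr_ge0 => i _; rewrite sqr_ge0.
have Y0 : 0 <= \sum_(j < 3) y j ^+ 2 by apply: sumr_ge0 => i _; rewrite sqr_ge0.
rewrite -/y; rewrite -hY in hCS.
move: (\sum_(j < 3) y j ^+ 2) (\sum_(i < 3) x i ^+ 2) (\sum_(i < 3) z i ^+ 2) (opnorm N ^+ 2)
  hCS F Sx0 Y0 (sqr_ge0 (opnorm N)) => Y Sx Sz K2 h1 h2 h3 h4 K20.
have h5 : Y ^+ 2 <= K2 * Sx * Y.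
  apply: (le_trans h1); rewrite [K2 * Sx]mulrC -mulrA ler_wpM2l //.
have [->|Yp] := eqVneq Y 0.
  by rewrite mulr_ge0.
have Ypos : 0 < Y by rewrite lt_def Yp h4.
by rewrite -(ler_pM2r Ypos) -expr2.
Qed.

End S.

Section S.
Variable R : realType.
Local Notation C := R[i].
Local Notation bl := (bl R).

Lemma tr_pauli (i : 'I_3) : \tr (pauli R i) = 0.
Proof.
have [->|[->|->]] : i = ord0 \/ i = lift ord0 ord0 \/ i = lift ord0 (lift ord0 ord0).
  by case: i => [[|[|[|]]]] // ?; [left|right;left|right;right]; apply: val_inj.
all: by rewrite /mxtrace !big_ord_recl big_ord0 !mxE /= ?addr0 ?subrr ?add0r.
Qed.

Lemma sep_facts (Psi : 'M[C]_2 -> 'M[C]_2) m (p : 'I_m -> R) (s w : 'I_m -> 'M[C]_2) :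
  trace_preserving Psi -> (forall k, density (s k)) -> (forall k, density (w k)) ->
  ampl Psi ((2%:R)^-1 *: Pplus R) = \sum_(k < m) (p k)%:C%C *: (s k *t w k) ->
  \sum_(k < m) (p k)%:C%C *: s k = (2%:R)^-1 *: 1%:M.
Proof.
move=> tp hs hw e; apply/matrixP => i j.
have := congr1 (fun M => \tr (blk i j M)) e => /=.
rewrite blk_ampl tp blkZ blk_Pplus mxtraceZ tr_delta blk_sum raddf_sum /=.
under eq_bigr => k _ do rewrite blkZ blk_tens scalerA mxtraceZ (proj2 (hw k)) mulr1.
move=> E; rewrite summxE !mxE E; apply: eq_bigr => k _; by rewrite mxE.
Qed.


Lemma tr_sum n I (r : seq I) (P : pred I) (F : I -> 'M[C]_n) :
  \tr (\sum_(k <- r | P k) F k) = \sum_(k <- r | P k) \tr (F k).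
Proof. exact: raddf_sum. Qed.

Lemma sum_p1 m (p : 'I_m -> R) (s : 'I_m -> 'M[C]_2) :
  (forall k, density (s k)) ->
  \sum_(k < m) (p k)%:C%C *: s k = (2%:R)^-1 *: 1%:M -> \sum_(k < m) p k = 1.
Proof.
move=> hs e; apply: (@complexI R); rewrite rmorph_sum /=.
have := congr1 mxtrace e; rewrite raddf_sum /= mxtraceZ mxtrace1 mulVf ?pnatr_eq0 //.
by under eq_bigr => k _ do rewrite mxtraceZ (proj2 (hs k)) mulr1.
Qed.

Lemma sum_pa m (p : 'I_m -> R) (s : 'I_m -> 'M[C]_2) (i : 'I_3) :
  \sum_(k < m) (p k)%:C%C *: s k = (2%:R)^-1 *: 1%:M ->
  \sum_(k < m) p k * bl (s k) i = 0.
Proof.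
move=> e.
have := congr1 (fun M => complex.Re (\tr (pauli R i *m M))) e => /=.
rewrite -scalemxAr mulmx1 mxtraceZ tr_pauli mulr0 mulmx_sumr tr_sum Re_sum.
move=> E; rewrite -[RHS](_ : complex.Re (0 : C) = 0) // -E; apply: eq_bigr => k _.
by rewrite -scalemxAr mxtraceZ Re_mulr.
Qed.

End S.

Theorem proposition4 (R : realType) (tau : 'M[R[i]]_(2 * 2)) :
  density tau ->
  forall Psi : 'M[R[i]]_2 -> 'M[R[i]]_2,
    entanglement_breaking Psi ->
    \tr (tau *m choi Psi) <=
      ((1 + Num.sqrt (enorm (bloch (ptrace1 tau)) ^+ 2
                      + opnorm (corr tau) ^+ 2)) / 2)%:C%C.
Proof.
move=> [[htau_h htau_psd] htr] Psi [[lin cp tp] heb].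
have [m [p [s [w [p0 hs hw e]]]]] := heb _ (density_rho R).
have D1 := @sep_facts R Psi m p s w tp hs hw e.
have P1 := @sum_p1 R m p s hs D1.
have hchoi : choi Psi = 2%:R *: ampl Psi ((2%:R)^-1 *: Pplus R).
  by rewrite ampl_scale // scalerA mulfV ?pnatr_eq0 // scale1r.
have hJ : adj (choi Psi) = choi Psi.
  have hP : psd (Pplus R) by rewrite Pplus_gram; exact: psd_gram.
  by have [] := cp 2 (Pplus R) hP.
rewrite (@tr_herm_real R _ _ _ htau_h hJ) lecR.
have two : (2%:R : R[i]) = (2%:R : R)%:C%C by rewrite rmorph_nat.
have ReT : complex.Re (\tr (tau *m choi Psi)) =
    2 * \sum_(k < m) p k * complex.Re (g R tau (s k) (w k)).
  rewrite hchoi e -scalemxAr mxtraceZ two Re_mulr mulmx_sumr tr_sum Re_sum.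
  congr (_ * _); apply: eq_bigr => k _.
  by rewrite -scalemxAr mxtraceZ Re_mulr.
rewrite ReT.
under eq_bigr => k _ do rewrite (@Re_g_dens R tau _ _ (hs k) (hw k) htr).
have Et : enorm (bloch (ptrace1 tau)) ^+ 2 =
    \sum_(j < 3) complex.Re (g R tau 1%:M (pauli R j)) ^+ 2.
  rewrite /enorm sqr_sqrtr; last by apply: sumr_ge0 => j _; rewrite sqr_ge0.
  by apply: eq_bigr => j _; rewrite mxE /g tr_ptrace mxtrace_mulC.
rewrite Et.
apply: (@main_ineq R m p (fun k i => bl R (s k) i) (fun k j => bl R (w k) j)
  (fun j => complex.Re (g R tau 1%:M (pauli R j)))
  (fun i => complex.Re (g R tau (pauli R i) 1%:M))
  (fun i j => complex.Re (g R tau (pauli R i) (pauli R j))) (opnorm (corr tau))).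
- exact: p0.
- exact: P1.
- by move=> k; apply: (@bloch_dens R).
- by move=> k; apply: (@bloch_dens R).
- by move=> i; apply: (@sum_pa R).
- move=> x.
  have e2 : forall j, \sum_(i < 3) x i * corr tau i j =
      \sum_(i < 3) x i * complex.Re (g R tau (pauli R i) (pauli R j)).
    by move=> j; apply: eq_bigr => i _; rewrite mxE.
  rewrite (eq_bigr _ (fun j _ => congr1 (fun v => v ^+ 2) (esym (e2 j)))).
  exact: (@opnorm_tr R).
Qed.
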